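(* Let $n\ge 2$, let $\mathcal{Y}=\{C^{(1)},\dots,C^{(n)}\}$ be a set of classes, let $E$ be a set of ordered pairs of distinct classes, and let $g:E\to\mathbb{R}$. Then the following are equivalent: (a) there exist a finite alphabet $\mathcal{U}=[k]$, a probability table $\{\mathbf{p}_u\}_{u\in\mathcal{U}}$ with every $\mathbf{p}_u\in(0,1)^n$ and $\sum_i p_u^{(i)}=1$, and a probability distribution $d$ on $\mathcal{U}$ such that $f_d(e)=g(e)$ for all $e\in E$; (b) there exists a point $x$ in the interior $\mathrm{Co}(\mathcal{H_R})$ of the linear ordering polytope such that $x(e)=g(e)$ for all $e\in E$.
   Context: Situational opinions: for $u\in\mathcal{U}$ and distinct $i,j$, $f_u(C^{(i)},C^{(j)})=p_u^{(i)}/(p_u^{(i)}+p_u^{(j)})$. Overall opinions (expert graph edge-weights): $f_d(e)=\sum_{u\in\mathcal{U}}d(u)f_u(e)$. Rankings: for a permutation $r=(r_1,\dots,r_n)$ of $[n]$, the ranking graph has weights $f_r(C^{(r_a)},C^{(r_b)})=1$ if $a<b$ and $0$ if $a>b$. Identify any weighting $x$ of ordered pairs satisfying $x(C^{(j)},C^{(i)})=1-x(C^{(i)},C^{(j)})$ with the vector $(x(C^{(i)},C^{(j)}))_{i<j}\in\mathbb{R}^{n(n-1)/2}$. The linear ordering polytope is the convex hull of the $n!$ vectors $f_r$; $\mathrm{Co}(\mathcal{H_R})$ denotes its (open) interior in $\mathbb{R}^{n(n-1)/2}$, i.e. the open convex hull of the ranking vectors. *)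

(* Defs.v *)
From HB Require Import structures.
From mathcomp Require Import all_boot all_order all_algebra all_fingroup.
From mathcomp Require Import reals.
Set Implicit Arguments. Unset Strict Implicit. Unset Printing Implicit Defensive.
Import Order.TTheory GRing.Theory Num.Theory.
Local Open Scope ring_scope.

Definition sit_opinion (R : realType) (n : nat) (pu : 'I_n -> R) (i j : 'I_n) : R :=
  pu i / (pu i + pu j).

Definition overall_opinion (R : realType) (n k : nat) (p : 'I_k -> 'I_n -> R)
  (d : 'I_k -> R) (i j : 'I_n) : R :=
  \sum_(u < k) d u * sit_opinion (p u) i j.

(* Ranking graph of the permutation r = (r_1,...,r_n) (r maps positions to
   classes): f_r(C^(r_a), C^(r_b)) = 1 if a < b, 0 if a > b. The position of
   class i is r^-1 i. *)
Definition ranking_weight {R : realType} (n : nat) (r : {perm 'I_n}) (i j : 'I_n) : R :=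
  if (val (r^-1)%g i < val (r^-1)%g j)%N then 1 else 0.

(* Weightings of ordered pairs are identified with vectors (x(i,j))_{i<j} in
   R^{n(n-1)/2}; only the coordinates with i < j matter below. *)

Definition in_LOP (R : realType) (n : nat) (y : 'I_n -> 'I_n -> R) : Prop :=
  exists lam : {perm 'I_n} -> R,
    (forall r, 0 <= lam r) /\ \sum_r lam r = 1 /\
    forall i j : 'I_n, (i < j)%N -> y i j = \sum_r lam r * ranking_weight (R:=R) r i j.

Definition in_LOP_interior (R : realType) (n : nat) (x : 'I_n -> 'I_n -> R) : Prop :=
  exists eps : R, 0 < eps /\
    forall y : 'I_n -> 'I_n -> R,
      (forall i j : 'I_n, (i < j)%N -> `|y i j - x i j| < eps) -> in_LOP y.

(* Main.v *)
Require Import Defs.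
From HB Require Import structures.
From mathcomp Require Import all_boot all_order all_algebra all_fingroup.
From mathcomp Require Import reals.
From mathcomp Require Import ring lra.
Set Implicit Arguments. Unset Strict Implicit. Unset Printing Implicit Defensive.
Import Order.TTheory GRing.Theory Num.Theory.
Local Open Scope ring_scope.
Section PL.
Variables (R : realType) (T : eqType) (p : T -> R).
Hypothesis ppos : forall x, 0 < p x.

Definition psum (s : seq T) := \sum_(m <- s) p m.
Fixpoint plw (o : seq T) : R :=
  match o with [::] => 1 | k :: t => p k / psum (k :: t) * plw t end.

Lemma psum_gt0 s : s != [::] -> 0 < psum s.
Proof.
case: s => // a s _; rewrite /psum big_cons.
apply: (lt_le_trans (ppos a)); rewrite lerDl; apply: sumr_ge0 => i _; exact: ltW.
Qed.

Lemma perms_nil : permutations (@nil T) = [:: [::]].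
Proof. by []. Qed.

Lemma perms_split s (F : seq T -> R) : uniq s -> (0 < size s)%N ->
  \sum_(o <- permutations s) F o = \sum_(x <- s) \sum_(t <- permutations (rem x s)) F (x :: t).
Proof.
move=> us sz; rewrite (perm_big _ (permutationsE sz)) big_allpairs_dep undup_id //.
Qed.

Lemma psum_cons x s t : uniq s -> x \in s -> t \in permutations (rem x s) ->
  psum (x :: t) = psum s.
Proof.
move=> us xs; rewrite mem_permutations => pt.
rewrite /psum; apply: perm_big.
rewrite perm_sym (perm_trans (perm_to_rem xs)) // perm_cons perm_sym //.
Qed.

Lemma PL1 s : uniq s -> \sum_(o <- permutations s) plw o = 1.
Proof.
move sz: (size s) => m; elim: m s sz => [|m IH] s sz us.
  by case: s sz us => // _ _; rewrite perms_nil big_seq1.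
rewrite perms_split ?sz //.
have s0 : s != [::] by case: s sz {us}.
transitivity (\sum_(x <- s) p x / psum s).
  apply: eq_big_seq => x xs.
  rewrite (@eq_big_seq _ _ _ _ _ _ (fun t => p x / psum s * plw t)); last first.
    by move=> t tp /=; rewrite (psum_cons us xs tp).
  rewrite -mulr_sumr IH ?mulr1 //; last exact: rem_uniq.
  by rewrite size_rem // sz.
rewrite -mulr_suml divff //; apply/lt0r_neq0/psum_gt0 => //.
Qed.

Lemma PL2 s i j : uniq s -> i \in s -> j \in s -> i != j ->
  \sum_(o <- permutations s) plw o * (if (index i o < index j o)%N then 1 else 0)
  = p i / (p i + p j).
Proof.
move sz: (size s) => m; elim: m s sz => [|m IH] s sz us.
  by case: s sz us.
move=> iS jS ij.
have s0 : s != [::] by case: s sz {us iS jS}.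
set q := p i / (p i + p j).
rewrite perms_split ?sz //.
pose e x := if x == i then 1 else if x == j then 0 else q.
transitivity (\sum_(x <- s) p x * e x / psum s).
  apply: eq_big_seq => x xs.
  rewrite (@eq_big_seq _ _ _ _ _ _ (fun t => p x / psum s * (plw t *
     (if (index i (x :: t) < index j (x :: t))%N then 1 else 0)))); last first.
    by move=> t tp /=; rewrite (psum_cons us xs tp) mulrA.
  rewrite -mulr_sumr /e /=.
  case: (eqVneq x i) => [->|xi].
    rewrite (eq_bigr (fun t => plw t)); last first.
      by move=> t _ /=; rewrite (negbTE ij) mulr1.
    rewrite PL1 ?mulr1 ?mulrAC //; exact: rem_uniq.
  case: (eqVneq x j) => [->|xj].
    rewrite big1 ?mulr0 ?mul0r //.
    by move=> t _ /=; rewrite mulr0.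
  rewrite (eq_bigr (fun t => plw t * (if (index i t < index j t)%N then 1 else 0))); last by [].
  rewrite IH ?size_rem ?sz //; last 3 first.
  - exact: rem_uniq.
  - by rewrite (mem_rem_uniq _ us) inE eq_sym xi.
  - by rewrite (mem_rem_uniq _ us) inE eq_sym xj.
  by rewrite -/q mulrAC.
rewrite -mulr_suml.
have -> : \sum_(x <- s) p x * e x = q * psum s.
  rewrite /psum mulr_sumr (big_rem _ iS) /= [in RHS](big_rem _ iS) /=.
  have jr : j \in rem i s by rewrite (mem_rem_uniq _ us) inE eq_sym ij jS.
  rewrite (big_rem _ jr) /= [in RHS](big_rem _ jr) /=.
  rewrite (@eq_big_seq _ _ _ _ _ _ (fun x => q * p x)); last first.
    move=> x; rewrite (mem_rem_uniq _ (rem_uniq _ us)) inE (mem_rem_uniq _ us) inE.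
    by case/andP => xj; case/andP => xi _; rewrite /e (negbTE xi) (negbTE xj) mulrC.
  rewrite /e eq_refl eq_sym (negbTE ij) eq_refl /q.
  have hp : p i + p j != 0 by apply/lt0r_neq0; rewrite addr_gt0.
  field; exact hp.
rewrite mulrK // unitfE; apply: lt0r_neq0; exact: psum_gt0.
Qed.
End PL.
Section Perms.
Variables (R : realType) (n : nat).

Lemma map_perm_inj : injective (fun r : {perm 'I_n} => map r (enum 'I_n)).
Proof.
move=> r r' /= h; apply/permP => x.
have hx (s : {perm 'I_n}) : nth x (map s (enum 'I_n)) (index x (enum 'I_n)) = s x.
  by rewrite (nth_map x) ?nth_index ?mem_enum ?index_mem ?mem_enum.
by rewrite -(hx r) -(hx r') h.
Qed.

Lemma sum_perm_lists (F : seq 'I_n -> R) :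
  \sum_(r : {perm 'I_n}) F (map r (enum 'I_n)) =
  \sum_(o <- permutations (enum 'I_n)) F o.
Proof.
rewrite -(big_map (fun r : {perm 'I_n} => map r (enum 'I_n)) xpredT F).
apply: perm_big; apply: uniq_perm.
- rewrite map_inj_uniq ?index_enum_uniq //; exact: map_perm_inj.
- exact: permutations_uniq.
move=> o; rewrite mem_permutations; apply/mapP/idP.
  move=> [r _ ->]; have e : enum 'I_n = val (ord_tuple n) by rewrite val_ord_tuple.
  rewrite [X in perm_eq _ X]e; apply/tuple_permP; exists r.
  by rewrite /=; apply: eq_map => i; rewrite tnth_ord_tuple.
move=> h. have e : enum 'I_n = val (ord_tuple n) by rewrite val_ord_tuple.
move: h; rewrite [X in perm_eq _ X]e => /tuple_permP [r ->].
exists r; first exact: mem_index_enum.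
by rewrite /=; apply: eq_map => i; rewrite tnth_ord_tuple.
Qed.

Lemma index_perm (r : {perm 'I_n}) i : index i (map r (enum 'I_n)) = val (r^-1 i)%g.
Proof.
by rewrite -{1}(permKV r i) index_map ?index_enum_ord //; exact: perm_inj.
Qed.
End Perms.

Lemma rw_val (R : realType) n (r : {perm 'I_n}) i j : ranking_weight (R:=R) r i j = if ((r^-1)%g i < (r^-1)%g j)%N then 1 else 0.
Proof. by rewrite /ranking_weight !pvalE. Qed.

Section BT.
Variables (R : realType) (n : nat) (pv : 'I_n -> R).
Hypothesis ppos : forall i, 0 < pv i.

Definition lamBT (r : {perm 'I_n}) := plw pv (map r (enum 'I_n)).

Lemma plw_gt0 o : 0 < plw pv o.
Proof.
elim: o => [|a o IH] /=; first exact: ltr01.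
by rewrite mulr_gt0 ?divr_gt0 ?psum_gt0.
Qed.

Lemma lamBT_gt0 r : 0 < lamBT r.
Proof. exact: plw_gt0. Qed.

Lemma lamBT_sum : \sum_r lamBT r = 1.
Proof. by rewrite /lamBT (sum_perm_lists (plw pv)) PL1 // enum_uniq. Qed.

Lemma lamBT_rw i j : i != j ->
  sit_opinion pv i j = \sum_r lamBT r * ranking_weight r i j.
Proof.
move=> ij; under eq_bigr do rewrite rw_val; rewrite /lamBT.
rewrite (eq_bigr (fun r : {perm 'I_n} => (fun o => plw pv o *
   (if (index i o < index j o)%N then 1 else 0)) (map r (enum 'I_n)))); last first.
  by move=> r _; rewrite !index_perm.
by rewrite (@sum_perm_lists R n (fun o => plw pv o * (if (index i o < index j o)%N then 1 else 0))) PL2 ?enum_uniq ?mem_enum.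
Qed.
End BT.

Lemma sum_delta (R : realType) (T : finType) (a : T) (F : T -> R) :
  \sum_r (a == r)%:R * F r = F a.
Proof.
rewrite (bigD1 a) //= eqxx mul1r big1 ?addr0 // => r ra.
by rewrite eq_sym (negbTE ra) mul0r.
Qed.

Lemma sum_delta1 (R : realType) (T : finType) (a : T) :
  \sum_r ((a == r)%:R : R) = 1.
Proof. by rewrite (bigD1 a) //= eqxx big1 ?addr0 // => r ra; rewrite eq_sym (negbTE ra). Qed.

Section Interior.
Variables (R : realType) (n : nat) (n2 : (1 < n)%N).
Let o0 : 'I_n := Ordinal (ltnW n2).
Let o1 : 'I_n := Ordinal n2.
Definition sA a b : {perm 'I_n} := (tperm a o0 * tperm (tperm a o0 b) o1)%g.
Definition sB a b : {perm 'I_n} := (sA a b * tperm o0 o1)%g.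

Lemma o01 : o0 != o1. Proof. by []. Qed.

Lemma sA_a a b : a != b -> sA a b a = o0.
Proof.
move=> ab; rewrite /sA permM tpermL.
have hb : tperm a o0 b != o0.
  by rewrite -{2}(tpermL a o0) (inj_eq perm_inj) eq_sym.
by apply: tpermD.
Qed.

Lemma sA_b a b : sA a b b = o1.
Proof. by rewrite /sA permM tpermL. Qed.

Lemma sB_a a b : a != b -> sB a b a = o1.
Proof. by move=> ab; rewrite /sB permM sA_a // tpermL. Qed.

Lemma sB_b a b : sB a b b = o0.
Proof. by rewrite /sB permM sA_b tpermR. Qed.

Lemma sAB_other a b k : a != b -> k != a -> k != b ->
  sB a b k = sA a b k /\ (1 < sA a b k)%N.
Proof.
move=> ab ka kb.
have h0 : sA a b k != o0 by rewrite -(sA_a ab) (inj_eq perm_inj).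
have h1 : sA a b k != o1 by rewrite -(sA_b a b) (inj_eq perm_inj).
split; first by rewrite /sB permM tpermD // eq_sym.
move: h0 h1; case: (sA a b k) => [[|[|m]] hm] //.
Qed.

Lemma swap_diff (a b i j : 'I_n) : (a < b)%N -> (i < j)%N ->
  ranking_weight (R:=R) (sA a b)^-1 i j - ranking_weight (R:=R) (sB a b)^-1 i j
  = ((i, j) == (a, b))%:R.
Proof.
move=> lab lij; have ab : a != b by rewrite neq_ltn lab.
rewrite !rw_val !invgK xpair_eqE.
have oth k : k != a -> k != b -> sB a b k = sA a b k /\ (1 < sA a b k)%N.
  by move=> ka kb; apply: sAB_other.
case: (eqVneq i a) => [eia|ia]; first subst i.
  have ja : j != a by rewrite neq_ltn lij orbT.
  case: (eqVneq j b) => [ejb|jb]; first subst j.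
    by rewrite sA_a // sA_b sB_a // sB_b /= subr0.
  have [e1 e2] := oth j ja jb.
  by rewrite sA_a // sB_a // e1 /= e2 (ltn_trans _ e2) // subrr.
case: (eqVneq i b) => [eib|ib]; first subst i.
  have jb : j != b by rewrite neq_ltn lij orbT.
  case: (eqVneq j a) => [ja|ja].
    by move: lij lab; rewrite ja => h1 h2; have := ltn_trans h1 h2; rewrite ltnn.
  have [e1 e2] := oth j ja jb.
  by rewrite sA_b sB_b e1 /= e2 (ltn_trans _ e2) // subrr.
have [e1 e2] := oth i ia ib.
rewrite e1 /=.
case: (eqVneq j a) => [eja|ja]; first subst j.
  by rewrite sA_a // sB_a //= ltnNge (ltnW e2) /= subr0.
case: (eqVneq j b) => [ejb|jb]; first subst j.
  by rewrite sA_b sB_b //= ltnNge (ltnW e2) /= subr0.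
have [f1 f2] := oth j ja jb.
by rewrite f1 subrr.
Qed.

Lemma interior_pos (x : 'I_n -> 'I_n -> R) (L : {perm 'I_n} -> R) c :
  0 < c -> (forall r, c <= L r) -> \sum_r L r = 1 ->
  (forall i j : 'I_n, (i < j)%N -> x i j = \sum_r L r * ranking_weight r i j) ->
  in_LOP_interior x.
Proof.
move=> c0 cL L1 hx.
pose N : R := (n * n)%:R.
have N0 : 0 < N by rewrite ltr0n muln_gt0 andbb (ltn_trans _ n2).
exists (c / N); split; first by rewrite divr_gt0.
move=> y hy.
pose P := fun k : 'I_n * 'I_n => (k.1 < k.2)%N.
pose dl (k : 'I_n * 'I_n) := y k.1 k.2 - x k.1 k.2.
pose w (k : 'I_n * 'I_n) (r : {perm 'I_n}) : R :=
  (((sA k.1 k.2)^-1)%g == r)%:R - (((sB k.1 k.2)^-1)%g == r)%:R.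
exists (fun r => L r + \sum_(k | P k) dl k * w k r).
split; [|split].
- move=> r.
  have h1 : \sum_(k | P k) `|dl k| <= c.
    apply: le_trans (_ : \sum_(k : 'I_n * 'I_n) c / N <= _).
      rewrite [X in _ <= X](bigID P) /= -[X in X <= _]addr0; apply: lerD.
        by apply: ler_sum => k Pk; apply: ltW; apply: hy.
      by apply: sumr_ge0 => k _; apply: ltW; rewrite divr_gt0.
    rewrite sumr_const card_prod card_ord -mulr_natr divfK //; exact: lt0r_neq0.
  have h2 : - \sum_(k | P k) `|dl k| <= \sum_(k | P k) dl k * w k r.
    rewrite -sumrN; apply: ler_sum => k _.
    have := ler_norm (dl k); have := ler_norm (- dl k); rewrite normrN.
    by rewrite /w; case: eqP => _; case: eqP => _ /=; lra.
  have := cL r; lra.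
- rewrite big_split /= L1 exchange_big /= big1 ?addr0 // => k Pk.
  rewrite -mulr_sumr /w sumrB !sum_delta1 subrr mulr0 //.
- move=> i j lij.
  under eq_bigr do rewrite mulrDl mulr_suml.
  rewrite big_split /= -hx // exchange_big /=.
  rewrite (eq_bigr (fun k => dl k * ((i, j) == k)%:R)); last first.
    move=> [a b] Pk; rewrite /=.
    under eq_bigr do rewrite -mulrA.
    rewrite -mulr_sumr; congr (_ * _).
    rewrite /w; under eq_bigr do rewrite mulrBl.
    rewrite sumrB !sum_delta /=; exact: swap_diff.
  rewrite (bigD1 (i, j)) //= eqxx mulr1 big1 ?addr0.
    by rewrite /dl /= addrC subrK.
  by move=> k /andP [_ kij]; rewrite eq_sym (negbTE kij) mulr0.
Qed.
End Interior.
Section Conv.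
Variables (R : realType) (n : nat).

Definition validpd k (p : 'I_k -> 'I_n -> R) (d : 'I_k -> R) :=
  (forall u i, 0 < p u i < 1) /\ (forall u, \sum_(i < n) p u i = 1) /\
  (forall u, 0 <= d u) /\ \sum_(u < k) d u = 1.

Definition inC (z : 'I_n -> 'I_n -> R) :=
  exists k (p : 'I_k -> 'I_n -> R) d, validpd p d /\
    forall i j, z i j = overall_opinion p d i j.

Lemma inC_conv a b t : inC a -> inC b -> 0 <= t <= 1 ->
  inC (fun i j => t * a i j + (1 - t) * b i j).
Proof.
move=> [k1 [p1 [d1 [[hp1 [hs1 [hd1 hD1]]] ha]]]] [k2 [p2 [d2 [[hp2 [hs2 [hd2 hD2]]] hb]]]].
move=> /andP [t0 t1].
pose p (u : 'I_(k1 + k2)) := match split u with inl a => p1 a | inr b => p2 b end.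
pose d (u : 'I_(k1 + k2)) := match split u with inl a => t * d1 a | inr b => (1 - t) * d2 b end.
have sl u : split (lshift k2 u) = inl u := unsplitK (inl u).
have sr u : split (rshift k1 u) = inr u := unsplitK (inr u).
exists (k1 + k2), p, d; split; [split; [|split; [|split]]|].
- by move=> u i; rewrite /p; case: (split u).
- by move=> u; rewrite /p; case: (split u).
- move=> u; rewrite /d; case: (split u) => v; apply: mulr_ge0 => //; lra.
- rewrite big_split_ord (eq_bigr (fun u => t * d1 u)); last by move=> u _; rewrite /d sl.
  rewrite (eq_bigr (fun u => (1 - t) * d2 u)); last by move=> u _; rewrite /d sr.
  by rewrite -!mulr_sumr hD1 hD2 /=; lra.
- move=> i j.
  have e1 : \sum_(u < k1) d (lshift k2 u) * sit_opinion (p (lshift k2 u)) i j = t * a i j.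
    by rewrite ha /overall_opinion mulr_sumr; apply: eq_bigr => u _; rewrite /d /p sl; ring.
  have e2 : \sum_(u < k2) d (rshift k1 u) * sit_opinion (p (rshift k1 u)) i j = (1 - t) * b i j.
    by rewrite hb /overall_opinion mulr_sumr; apply: eq_bigr => u _; rewrite /d /p sr; ring.
  by rewrite /overall_opinion big_split_ord /= e1 e2.
Qed.

Lemma orthant (C : ('I_n -> 'I_n -> R) -> Prop)
  (Cc : forall a b t, C a -> C b -> 0 <= t <= 1 -> C (fun i j => t * a i j + (1 - t) * b i j))
  (x : 'I_n -> 'I_n -> R) (S : seq ('I_n * 'I_n)) (F : pred ('I_n * 'I_n)) :
  uniq S ->
  (forall s : 'I_n * 'I_n -> bool, exists z, C z /\
     (forall k, k \in S -> if s k then x k.1 k.2 < z k.1 k.2 else z k.1 k.2 < x k.1 k.2) /\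
     (forall k, F k -> z k.1 k.2 = x k.1 k.2)) ->
  exists z, C z /\ forall k, (k \in S) || F k -> z k.1 k.2 = x k.1 k.2.
Proof.
elim: S F => [|m S IH] F /= us H.
  have [z [Cz [_ Fz]]] := H (fun _ => true).
  by exists z; split => // k /= /Fz.
case/andP: us => mS us.
have := IH (predU1 m F) us.
case.
  move=> s.
  have [z1 [C1 [S1 F1]]] := H (fun k => if k == m then true else s k).
  have [z0 [C0 [S0 F0]]] := H (fun k => if k == m then false else s k).
  have := S1 m; rewrite mem_head eqxx => /(_ isT) h1.
  have := S0 m; rewrite mem_head eqxx => /(_ isT) h0.
  pose t := (x m.1 m.2 - z0 m.1 m.2) / (z1 m.1 m.2 - z0 m.1 m.2).
  have dpos : 0 < z1 m.1 m.2 - z0 m.1 m.2 by lra.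
  have tpos : 0 < t by rewrite divr_gt0 //; lra.
  have tlt1 : t < 1 by rewrite ltr_pdivrMr //; lra.
  exists (fun i j => t * z1 i j + (1 - t) * z0 i j); split; [|split].
  - by apply: Cc => //; apply/andP; split; apply: ltW.
  - move=> k kS; have km : k != m by apply: contraNneq mS => <-.
    have := S1 k; have := S0 k; rewrite inE kS orbT (negbTE km) => /(_ isT) a0 /(_ isT) a1.
    case: (s k) a0 a1 => a0 a1 /=.
      have : 0 < t * (z1 k.1 k.2 - x k.1 k.2) by rewrite mulr_gt0 //; lra.
      have : 0 < (1 - t) * (z0 k.1 k.2 - x k.1 k.2) by rewrite mulr_gt0 //; lra.
      lra.
    have : 0 < t * (x k.1 k.2 - z1 k.1 k.2) by rewrite mulr_gt0 //; lra.
    have : 0 < (1 - t) * (x k.1 k.2 - z0 k.1 k.2) by rewrite mulr_gt0 //; lra.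
    lra.
  - move=> k /= /orP [/eqP -> | Fk].
      rewrite /t; field; lra.
    by rewrite F1 // F0 //; ring.
move=> z [Cz hz]; exists z; split => // k.
rewrite inE; case/orP; first case/orP.
- by move=> km; apply: hz; rewrite /predU1 /= km orbT.
- by move=> kS; apply: hz; rewrite kS.
- by move=> Fk; apply: hz; rewrite /predU1 /= Fk !orbT.
Qed.
End Conv.

Section Mix.
Variables (R : realType) (n : nat).

Lemma inC_mix (lam : {perm 'I_n} -> R) (P : {perm 'I_n} -> 'I_n -> R) :
  (forall r, 0 <= lam r) -> \sum_r lam r = 1 ->
  (forall r i, 0 < P r i < 1) -> (forall r, \sum_i P r i = 1) ->
  inC (fun i j => \sum_r lam r * sit_opinion (P r) i j).
Proof.
move=> l0 l1 P01 P1.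
exists #|{: {perm 'I_n}}|, (fun u => P (enum_val u)), (fun u => lam (enum_val u)).
split; [split; [|split; [|split]]|].
- by move=> u i.
- by move=> u.
- by move=> u.
- by rewrite -(big_enum_val (fun r => lam r)) /= -l1; apply: eq_bigl.
- move=> i j; rewrite /overall_opinion -(big_enum_val (fun r => lam r * sit_opinion (P r) i j)) /=.
  by apply: eq_bigl.
Qed.
End Mix.

Section Approx.
Variables (R : realType) (n : nat) (n2 : (1 < n)%N).

Definition Pe (e : R) (r : {perm 'I_n}) (i : 'I_n) : R :=
  e ^+ ((r^-1)%g i) / \sum_k e ^+ ((r^-1)%g k).

Lemma ratio_le (a b e : R) : 0 < a -> 0 < b -> a <= e * b -> a / (a + b) <= e.
Proof.
move=> a0 b0 h; have e0 : 0 < e.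
  by rewrite -(pmulr_lgt0 _ b0); apply: lt_le_trans h.
rewrite ler_pdivrMr ?addr_gt0 //.
have : 0 <= e * a by rewrite mulr_ge0 // ltW.
nra.
Qed.

Lemma exp_le_e (e : R) d : 0 < e -> e < 1 -> (0 < d)%N -> e ^+ d <= e.
Proof.
move=> e0 e1; case: d => // d _; rewrite exprS.
by apply: ler_piMr; [exact: ltW | exact: exprn_ile1 (ltW e0) (ltW e1)].
Qed.

Lemma Pe_valid e r : 0 < e -> e < 1 ->
  (forall i, 0 < Pe e r i < 1) /\ \sum_i Pe e r i = 1.
Proof.
move=> e0 e1.
have S0 : 0 < \sum_k e ^+ ((r^-1)%g k).
  rewrite (bigD1 (Ordinal n2)) //= ltr_pwDl ?exprn_gt0 //.
  by apply: sumr_ge0 => k _; rewrite exprn_ge0 // ltW.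
split.
  move=> i; rewrite divr_gt0 ?exprn_gt0 //= ltr_pdivrMr // mul1r.
  pose k : 'I_n := if i == Ordinal n2 then Ordinal (ltnW n2) else Ordinal n2.
  have ki : k != i by rewrite /k; case: (eqVneq i (Ordinal n2)) => [->|h] //; rewrite eq_sym.
  rewrite (bigD1 i) //= ltrDl (bigD1 k) //= ltr_pwDl ?exprn_gt0 //.
  by apply: sumr_ge0 => l _; rewrite exprn_ge0 // ltW.
by rewrite /Pe -mulr_suml divff // lt0r_neq0.
Qed.

Lemma Pe_close e r i j : 0 < e -> e < 1 -> i != j ->
  `|sit_opinion (Pe e r) i j - ranking_weight r i j| <= e.
Proof.
move=> e0 e1 ij.
set S := \sum_k e ^+ ((r^-1)%g k).
have S0 : 0 < S.
  rewrite /S (bigD1 (Ordinal n2)) //= ltr_pwDl ?exprn_gt0 //.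
  by apply: sumr_ge0 => k _; rewrite exprn_ge0 // ltW.
set a := e ^+ ((r^-1)%g i); set b := e ^+ ((r^-1)%g j).
have a0 : 0 < a by rewrite exprn_gt0.
have b0 : 0 < b by rewrite exprn_gt0.
have -> : sit_opinion (Pe e r) i j = a / (a + b).
  rewrite /sit_opinion /Pe -/S -/a -/b; field.
  by apply/andP; split; apply: lt0r_neq0 => //; rewrite addr_gt0.
have hne : ((r^-1)%g i : nat) != (r^-1)%g j.
  by apply: contra ij => /eqP /val_inj /perm_inj ->.
rewrite rw_val; case: ltnP => hl.
  have hb : b <= e * a.
    rewrite /b /a -(subnKC (ltnW hl)) exprD mulrC ler_pM2r // exp_le_e //.
    by rewrite subn_gt0.
  have -> : a / (a + b) - 1 = - (b / (b + a)).
    field; by apply: lt0r_neq0; rewrite addr_gt0.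
  rewrite normrN ger0_norm; first exact: ratio_le.
  by rewrite divr_ge0 ?ltW // addr_gt0.
have hl' : ((r^-1)%g j < (r^-1)%g i)%N by rewrite ltn_neqAle eq_sym hne hl.
have ha : a <= e * b.
  rewrite /b /a -(subnKC (ltnW hl')) exprD mulrC ler_pM2r // exp_le_e //.
  by rewrite subn_gt0.
rewrite subr0 ger0_norm; first exact: ratio_le.
by rewrite divr_ge0 ?ltW // addr_gt0.
Qed.
End Approx.

Lemma oo_antisym (R : realType) n k (p : 'I_k -> 'I_n -> R) d :
  (forall u i, 0 < p u i) -> \sum_u d u = 1 ->
  forall i j, overall_opinion p d j i = 1 - overall_opinion p d i j.
Proof.
move=> pp d1 i j; rewrite /overall_opinion -[X in _ = X - _]d1 -sumrB.
apply: eq_bigr => u _; rewrite /sit_opinion.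
have h1 : p u j + p u i != 0 by apply: lt0r_neq0; rewrite addr_gt0.
have h2 : p u i + p u j != 0 by apply: lt0r_neq0; rewrite addr_gt0.
rewrite [p u j + p u i]addrC; field; exact: h2.
Qed.

Lemma fin_min (R : realType) (T : finType) (f : T -> R) :
  (forall r, 0 < f r) -> exists c, 0 < c /\ forall r, c <= f r.
Proof.
move=> fp.
suff: forall s : seq T, exists c, 0 < c /\ forall r, r \in s -> c <= f r.
  by case/(_ (enum T)) => c [c0 h]; exists c; split => // r; apply: h; rewrite mem_enum.
elim => [|a s [c [c0 h]]]; first by exists 1.
case: (leP c (f a)) => h'; [exists c | exists (f a)]; split => // r;
  rewrite inE => /orP [/eqP -> | rs] //.
- exact: h.
- exact: le_trans (ltW h') (h r rs).
Qed.

Theorem theorem1 (R : realType) (n : nat) (E : pred ('I_n * 'I_n))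
  (g : 'I_n -> 'I_n -> R) :
  (2 <= n)%N ->
  (forall e, E e -> e.1 != e.2) ->
  ((exists (k : nat) (p : 'I_k -> 'I_n -> R) (d : 'I_k -> R),
      (forall u i, 0 < p u i < 1) /\
      (forall u, \sum_(i < n) p u i = 1) /\
      (forall u, 0 <= d u) /\ \sum_(u < k) d u = 1 /\
      (forall e, E e -> overall_opinion p d e.1 e.2 = g e.1 e.2))
   <->
   (exists x : 'I_n -> 'I_n -> R,
      (forall i j : 'I_n, i != j -> x j i = 1 - x i j) /\
      in_LOP_interior x /\
      (forall e, E e -> x e.1 e.2 = g e.1 e.2))).
Proof.
move=> n2 hE; split.
- case=> k [p [d [hp [hs [hd [hD hg]]]]]].
  have pp : forall u i, 0 < p u i by move=> u i; case/andP: (hp u i).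
  exists (overall_opinion p d); split; [|split].
  + by move=> i j _; apply: oo_antisym.
  + pose L r := \sum_u d u * lamBT (p u) r.
    have Lpos : forall r, 0 < L r.
      move=> r; have [u0 /andP [_ du0]] : exists u, true && (0 < d u).
        by apply: psumr_neq0P => //; rewrite hD; apply/eqP; exact: oner_neq0.
      rewrite /L (bigD1 u0) //=.
      apply: lt_le_trans (_ : 0 < d u0 * lamBT (p u0) r) _.
        by rewrite mulr_gt0 //; apply: lamBT_gt0; exact: pp.
      rewrite lerDl; apply: sumr_ge0 => u _; rewrite mulr_ge0 // ltW //.
      by apply: lamBT_gt0; exact: pp.
    have [c [c0 cL]] := fin_min Lpos.
    apply: (interior_pos n2 (L := L) c0 cL).
      rewrite /L exchange_big /= -hD; apply: eq_bigr => u _.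
      by rewrite -mulr_sumr lamBT_sum ?mulr1 //; exact: pp.
    move=> i j lij; rewrite /overall_opinion /L.
    have ij : i != j by rewrite neq_ltn lij.
    rewrite (eq_bigr (fun u => d u * \sum_r lamBT (p u) r * ranking_weight r i j)); last first.
      by move=> u _; rewrite lamBT_rw //; exact: pp.
    under [RHS]eq_bigr do rewrite mulr_suml.
    rewrite [RHS]exchange_big; apply: eq_bigr => u _; rewrite mulr_sumr.
    by apply: eq_bigr => r _; rewrite mulrA.
  + by move=> e Ee; apply: hg.
- case=> x [xa [[eps [eps0 H]] xg]].
  pose e' := eps / (2 + 2 * eps).
  have d0 : 0 < 2 + 2 * eps by lra.
  have e'0 : 0 < e' by rewrite divr_gt0.
  have e'1 : e' < 1 by rewrite ltr_pdivrMr //; lra.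
  have e'h : e' < eps / 2 by rewrite ltr_pdivrMr // mulrAC ltr_pdivlMr //; nra.
  have := @orthant R n (@inC R n) (@inC_conv R n) x
     [seq k : 'I_n * 'I_n <- enum {: 'I_n * 'I_n} | (k.1 < k.2)%N] pred0.
  case.
  + by rewrite filter_uniq // enum_uniq.
  + move=> s.
    pose y i j := x i j + (if s (i, j) then eps / 2 else - (eps / 2)).
    have [lam [l0 [l1 hy]]] : in_LOP y.
      apply: H => i j _; rewrite /y addrC addKr.
      by case: (s _); rewrite ?normrN ger0_norm; lra.
    exists (fun i j => \sum_r lam r * sit_opinion (Pe e' r) i j); split; [|split] => //.
    * apply: inC_mix => // [r i|r].
        by case: (Pe_valid n2 r e'0 e'1) => h _; exact: h.
      by case: (Pe_valid n2 r e'0 e'1).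
    * move=> [i j]; rewrite mem_filter /= => /andP [lij _].
      set Z := \sum_r lam r * sit_opinion (Pe e' r) i j.
      have hz : `|Z - y i j| <= e'.
        rewrite /Z hy // -sumrB; apply: le_trans (ler_norm_sum _ _ _) _.
        apply: le_trans (_ : \sum_r lam r * e' <= _).
          apply: ler_sum => r _; rewrite -mulrBr normrM ger0_norm //.
          by apply: ler_wpM2l => //; apply: Pe_close => //; rewrite neq_ltn lij.
        by rewrite -mulr_suml l1 mul1r.
      have := ler_norm (Z - y i j); have := ler_norm (- (Z - y i j)); rewrite normrN; move: hz.
      by rewrite /y; case: (s (i, j)) => /=; lra.
  + move=> z [[k [p [d [[hp [hs [hd hD]]] hz]]]] zx].
    have pp : forall u i, 0 < p u i by move=> u i; case/andP: (hp u i).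
    have zx' : forall i j : 'I_n, (i < j)%N -> overall_opinion p d i j = x i j.
      move=> i j lij; rewrite -hz; apply: (zx (i, j)).
      by rewrite mem_filter /= lij mem_enum.
    exists k, p, d; split => //; split => //; split => //; split => //.
    move=> e Ee; rewrite -xg //; have ne := hE e Ee.
    case: (ltngtP e.1 e.2) => h.
    * exact: zx'.
    * by rewrite oo_antisym // zx' // -(xa e.2 e.1) // eq_sym.
    * by move: ne; rewrite (val_inj h) eqxx.
Qed.
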